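(* Let $F$ be a unit tree and let $L,M$ be opposite politeral units of $F$. Then for every $!$-unit $!E$ of $F$: $!E$ dominates $L$ in $F$ if and only if $!E$ dominates $M$ in $F$.
   Context: Formulas are built from atoms by $\neg$ (on atoms only), binary $\wedge,\vee$ and unary $!$ (branching recurrence) and $?$ (branching corecurrence). Fix a formula $\mathbb{F}_0$. Oformulas are occurrences of subformulas of $\mathbb{F}_0$. Politerals are occurrences of literals $P$ or $\neg P$ that are not in the scope of $\neg$. The modal depth of an oformula is the number of its proper superoccurrences of the form $!E$ or $?E$. A unit is $E[\vec x]$, with $E$ an oformula and $\vec x$ a tuple of infinite bitstrings whose length is the modal depth of $E$. Parenthood: - $G_0[\vec x]$ and $G_1[\vec x]$ are the children of $(G_0\wedge G_1)[\vec x]$ and of $(G_0\vee G_1)[\vec x]$; - the $G[\vec x,y]$, for all infinite bitstrings $y$, are the children of $!G[\vec x]$ and of $?G[\vec x]$. The root is $\mathbb{F}_0[\,]$. ''Subunit'' and ''superunit'' are the reflexive-transitive closures of the child relation and its converse, and ''proper'' means distinct. The $\mathbb{F}_0$-origin $\tilde E$ of $E[\vec x]$ is $E$. $!$-, $?$-, $\wedge$-, $\vee$- and politeral units are those whose origin is of the corresponding form. The smallest common superunit of two units is their common superunit that is a subunit of all their common superunits. $E$ drives $G$ through $H$ iff $H$ is the smallest common superunit of $E,G$ and no proper $?$-superunit of $E$ is a subunit of $H$. A unit tree is a nonempty set $S$ of units such that, for each $E\in S$: all superunits of $E$ are in $S$; if $E$ is a $\wedge$- or $\vee$-unit, both children of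 $E$ are in $S$; and if $E$ is a $!$- or $?$-unit, at least one child of $E$ is in $S$. Runs are sequences of labeled moves $\wp\beta$ with $\wp\in\{\top,\bot\}$. For a run $\Theta$ and a string $\alpha$, $\Theta^{\alpha}$ keeps only the labmoves whose move begins with $\alpha$ and deletes that prefix. For an infinite bitstring $y$, $\Theta^{\preceq y}$ keeps only the labmoves $\wp\,u.\beta$ with $u$ a finite prefix of $y$ and deletes ''$u.$''. Fix an arbitrary run $\Omega$. Its projection on $\mathbb{F}_0[\,]$ is $\Omega$. If $\Theta$ is the projection on $E[\vec x]$, then the projection on the child $G_i[\vec x]$ of a $\wedge$/$\vee$-unit is $\Theta^{i.}$, and on the child $G[\vec x,y]$ of a $!$/$?$-unit it is $\Theta^{\preceq y}$. Politeral units $L,M$ are opposite iff $\tilde L$ and $\tilde M$ are literals one of which is the negation of the other and, for each $\wp\in\{\top,\bot\}$, the set of $\wp$-labeled moves in the projection of $\Omega$ on $L$ equals the set of $\neg\wp$-labeled moves in the projection of $\Omega$ on $M$. For a unit tree $F$ and $!E,G\in F$, a $!E$-over-$G$ domination chain in $F$ is a sequence $L_1,M_1,X_1,\dots,L_n,M_n,X_n$ ($n\ge1$) of units such that, writing $L_{n+1}=G$, for each $i\le n$: 1. $L_i,M_i$ are opposite politeral units of $F$; 2. $M_i$ drives $L_{i+1}$ through $X_i$; 3. $M_i$ drives no $L_j$ with $i+2\le j\le n+1$; 4. $M_i$ is not a subunit of $!E$; 5. $L_1$ is a subunit of $!E$. $!E$ dominates $G$ in $F$ iff $!E,G\in F$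 and either $G$ is a proper subunit of $!E$ or there exists a $!E$-over-$G$ domination chain in $F$. *)

(* Defs.v *)
From Stdlib Require Import List Bool.
Import ListNotations.

Inductive formula : Type :=
| Atom    : nat -> formula
| NegAtom : nat -> formula
| And     : formula -> formula -> formula
| Or      : formula -> formula -> formula
| Ofc     : formula -> formula
| Quest   : formula -> formula.

(** * Units
   A unit E[x] is encoded by the path from the root F0[] to it: each step
   is either [Dir b] (child G_b of a ∧/∨-unit, b=false for G_0, true for G_1)
   or [Br y] (child G[x,y] of a !/?-unit).  The oformula E is the path with
   the bitstrings erased, and x is the list of bitstrings y occurring on it. *)
Definition bitstring := nat -> bool.

Inductive step : Type :=
| Dir : bool -> step
| Br  : bitstring -> step.

Definition cunit := list step.  (* root-first *)

Fixpoint at_path (f : formula) (p : cunit) : option formula :=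
  match p with
  | [] => Some f
  | s :: p' =>
      match f, s with
      | And g h, Dir b => at_path (if b then h else g) p'
      | Or  g h, Dir b => at_path (if b then h else g) p'
      | Ofc g, Br _ => at_path g p'
      | Quest g, Br _ => at_path g p'
      | _, _ => None
      end
  end.

Definition is_unit (F0 : formula) (u : cunit) : Prop := at_path F0 u <> None.

Definition origin (F0 : formula) (u : cunit) : option formula := at_path F0 u.

Definition is_ofc_unit F0 u : Prop := exists g, origin F0 u = Some (Ofc g).
Definition is_quest_unit F0 u : Prop := exists g, origin F0 u = Some (Quest g).
Definition is_politeral_unit F0 u : Prop :=
  exists n, origin F0 u = Some (Atom n) \/ origin F0 u = Some (NegAtom n).

(* E is a subunit of H (H is a superunit of E): reflexive-transitive closure
   of the child relation = H is a prefix of E. *)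
Definition subunit (E H : cunit) : Prop := exists q, E = H ++ q.
Definition proper_subunit (E H : cunit) : Prop := subunit E H /\ E <> H.

Definition child (F0 : formula) (C P : cunit) : Prop :=
  is_unit F0 C /\ exists s, C = P ++ [s].

Definition smallest_common_superunit F0 (H E G : cunit) : Prop :=
  is_unit F0 H /\ subunit E H /\ subunit G H /\
  (forall K, is_unit F0 K -> subunit E K -> subunit G K -> subunit H K).

Definition drives F0 (E G H : cunit) : Prop :=
  smallest_common_superunit F0 H E G /\
  ~ (exists K, is_quest_unit F0 K /\ proper_subunit E K /\ subunit K H).

Definition unit_tree (F0 : formula) (S : cunit -> Prop) : Prop :=
  (exists E, S E) /\
  (forall E, S E -> is_unit F0 E) /\
  (forall E, S E -> forall H, subunit E H -> S H) /\
  (forall E, S E ->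
     (forall g h, origin F0 E = Some (And g h) \/ origin F0 E = Some (Or g h) ->
        S (E ++ [Dir false]) /\ S (E ++ [Dir true])) /\
     (forall g, origin F0 E = Some (Ofc g) \/ origin F0 E = Some (Quest g) ->
        exists y, S (E ++ [Br y]))).

Inductive sym : Type := S0 | S1 | Dot | Other (n : nat).
Definition move := list sym.
Inductive player : Type := Top | Bot.
Definition neg_player (p : player) : player :=
  match p with Top => Bot | Bot => Top end.
Definition labmove := (player * move)%type.

(* A run is a (finite or infinite) sequence of labmoves; we encode it as a
   function nat -> option labmove, the run being the sequence of its
   [Some] entries in order ([None] entries are ignored). *)
Definition run := nat -> option labmove.

Definition sym_eqb (a b : sym) : bool :=
  match a, b with
  | S0, S0 | S1, S1 | Dot, Dot => true
  | Other n, Other m => Nat.eqb n m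
  | _, _ => false
  end.

Fixpoint strip_prefix (alpha m : move) : option move :=
  match alpha, m with
  | [], _ => Some m
  | a :: alpha', b :: m' => if sym_eqb a b then strip_prefix alpha' m' else None
  | _ :: _, [] => None
  end.

(* If m = u.beta with u a finite prefix of y (u a bitstring), return beta. *)
Fixpoint strip_branch (y : bitstring) (k : nat) (m : move) : option move :=
  match m with
  | Dot :: beta => Some beta
  | S0 :: m' => if y k then None else strip_branch y (S k) m'
  | S1 :: m' => if y k then strip_branch y (S k) m' else None
  | _ => None
  end.

Definition map_run (f : move -> option move) (T : run) : run :=
  fun n => match T n with
           | Some (p, m) => match f m with Some b => Some (p, b) | None => None end
           | None => None
           end.

Definition bit (b : bool) : sym := if b then S1 else S0.

Definition proj_step (s : step) (T : run) : run :=
  match s with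
  | Dir b => map_run (strip_prefix [bit b; Dot]) T
  | Br y => map_run (strip_branch y 0) T
  end.

Fixpoint proj (T : run) (u : cunit) : run :=
  match u with
  | [] => T
  | s :: u' => proj (proj_step s T) u'
  end.

Definition occurs (T : run) (p : player) (m : move) : Prop :=
  exists n, T n = Some (p, m).

Definition opposite F0 (Omega : run) (L M : cunit) : Prop :=
  (exists n, (origin F0 L = Some (Atom n) /\ origin F0 M = Some (NegAtom n)) \/
             (origin F0 L = Some (NegAtom n) /\ origin F0 M = Some (Atom n))) /\
  (forall p m, occurs (proj Omega L) p m <-> occurs (proj Omega M) (neg_player p) m).

(* A !E-over-G domination chain L_1,M_1,X_1,...,L_n,M_n,X_n in F, encoded
   0-indexed by functions Ls Ms Xs with indices 0..n-1, and L_{n+1} = G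
   encoded as [Lx n] below. *)
Definition domination_chain F0 (Omega : run) (F : cunit -> Prop) (E G : cunit)
  (n : nat) (Ls Ms Xs : nat -> cunit) : Prop :=
  let Lx := fun j => if Nat.ltb j n then Ls j else G in
  1 <= n /\
  (forall i, i < n ->
     F (Ls i) /\ F (Ms i) /\ is_politeral_unit F0 (Ls i) /\
     is_politeral_unit F0 (Ms i) /\ opposite F0 Omega (Ls i) (Ms i) /\
     drives F0 (Ms i) (Lx (S i)) (Xs i) /\
     (forall j, i + 2 <= j <= n -> forall H, ~ drives F0 (Ms i) (Lx j) H) /\
     ~ subunit (Ms i) E) /\
  subunit (Ls 0) E.

Definition dominates F0 (Omega : run) (F : cunit -> Prop) (E G : cunit) : Prop :=
  F E /\ F G /\ is_ofc_unit F0 E /\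
  (proper_subunit G E \/
   exists n Ls Ms Xs, domination_chain F0 Omega F E G n Ls Ms Xs).

(* Main.v *)
Require Import Defs.
From Stdlib Require Import List Bool Arith Lia Classical.
Import ListNotations.

Lemma pol_unit F0 u : is_politeral_unit F0 u -> is_unit F0 u.
Proof.
  intros [n [H|H]]; unfold is_unit; unfold origin in H; rewrite H; discriminate.
Qed.

Lemma drives_refl F0 M : is_unit F0 M -> drives F0 M M M.
Proof.
  intros HU. split.
  - repeat split; auto; exists []; rewrite app_nil_r; reflexivity.
  - intros [K [_ [[[q Hq] Hne] [q' Hq']]]].
    apply Hne. subst K.
    assert (Hl := f_equal (@length _) Hq). rewrite !length_app in Hl.
    assert (q' = []) by (destruct q'; simpl in *; [reflexivity | lia]).
    subst. rewrite app_nil_r. reflexivity.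
Qed.

Lemma opp_sym F0 Omega L M : opposite F0 Omega L M -> opposite F0 Omega M L.
Proof.
  intros [[n [[A B]|[A B]]] H]; split.
  - exists n; right; auto.
  - intros p m; rewrite H; destruct p; simpl; tauto.
  - exists n; left; auto.
  - intros p m; rewrite H; destruct p; simpl; tauto.
Qed.

Lemma min_ex (P : nat -> Prop) k : P k -> exists i, P i /\ forall j, j < i -> ~ P j.
Proof.
  induction k as [k IH] using lt_wf_ind. intros Hk.
  destruct (classic (exists j, j < k /\ P j)) as [[j [Hj Pj]]|Hn].
  - exact (IH j Hj Pj).
  - exists k; split; auto. intros j Hj Pj; apply Hn; eauto.
Qed.

Lemma dir F0 Omega F L M E :
  F L -> F M ->
  is_politeral_unit F0 L -> is_politeral_unit F0 M ->
  opposite F0 Omega L M -> is_ofc_unit F0 E ->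
  dominates F0 Omega F E L -> dominates F0 Omega F E M.
Proof.
  intros FL FM PL PM OLM OE [FE [_ [_ Hd]]].
  split; [exact FE|]. split; [exact FM|]. split; [exact OE|].
  destruct (classic (subunit M E)) as [HME|HME].
  { left. split; auto. intro Heq; subst.
    destruct OE as [g Hg]; destruct PM as [k [Hk|Hk]]; congruence. }
  right. destruct Hd as [HLE | [n [Ls [Ms [Xs Hc]]]]].
  - exists 1, (fun _ => L), (fun _ => M), (fun _ => M).
    split; [lia|]. split.
    + intros i Hi. simpl.
      split; auto. split; auto. split; auto. split; auto. split; auto. split.
      * apply drives_refl, pol_unit; auto.
      * split; auto. intros j Hj; lia.
    + destruct HLE; auto.
  - destruct Hc as [Hn [Hc H0]].
    set (Ls' := fun j => if Nat.ltb j n then Ls j else L).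
    set (Ms' := fun j => if Nat.ltb j n then Ms j else M).
    assert (HP : n <= n /\ exists H, drives F0 (Ms' n) M H).
    { split; auto. exists M. unfold Ms'. rewrite Nat.ltb_irrefl.
      apply drives_refl, pol_unit; auto. }
    destruct (min_ex (fun i => i <= n /\ exists H, drives F0 (Ms' i) M H) n HP) as [i [[Hin [H HH]] Hmin]].
    exists (S i), Ls', Ms', (fun j => if Nat.ltb j i then Xs j else H).
    split; [lia|]. split.
    + intros k Hk.
      assert (Hbase : F (Ls' k) /\ F (Ms' k) /\ is_politeral_unit F0 (Ls' k) /\
        is_politeral_unit F0 (Ms' k) /\ opposite F0 Omega (Ls' k) (Ms' k) /\
        ~ subunit (Ms' k) E).
      { unfold Ls', Ms'. destruct (Nat.ltb_spec k n).
        - destruct (Hc k) as (A1&A2&A3&A4&A5&_&_&A8); auto; tauto.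
        - tauto. }
      destruct Hbase as (B1&B2&B3&B4&B5&B6).
      split; auto. split; auto. split; auto. split; auto. split; auto. split; [|split; auto].
      * destruct (Nat.ltb_spec k i).
        -- destruct (Hc k) as (_&_&_&_&_&A6&_); [lia|].
           assert (E1 : Ms' k = Ms k) by (unfold Ms'; destruct (Nat.ltb_spec k n); [reflexivity|lia]).
           rewrite E1.
           destruct (Nat.ltb_spec (S k) (S i)); [|lia].
           unfold Ls'. exact A6.
        -- assert (k = i) by lia. subst k.
           destruct (Nat.ltb_spec (S i) (S i)); [lia|]. exact HH.
      * intros j Hj H' Hdr.
        destruct (Nat.ltb_spec j (S i)).
        -- destruct (Hc k) as (_&_&_&_&_&_&A7&_); [lia|].
           apply (A7 j ltac:(lia) H').
           assert (E1 : Ms' k = Ms k) by (unfold Ms'; destruct (Nat.ltb_spec k n); [reflexivity|lia]).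
           rewrite <- E1. unfold Ls' in Hdr. exact Hdr.
        -- apply (Hmin k ltac:(lia)). split; [lia|]. exists H'. exact Hdr.
    + unfold Ls'. destruct (Nat.ltb_spec 0 n); [exact H0|lia].
Qed.

Theorem lemma8p4 (F0 : formula) (Omega : run) (F : cunit -> Prop)
  (L M : cunit) :
  unit_tree F0 F ->
  F L -> F M ->
  is_politeral_unit F0 L -> is_politeral_unit F0 M ->
  opposite F0 Omega L M ->
  forall E : cunit, F E -> is_ofc_unit F0 E ->
    (dominates F0 Omega F E L <-> dominates F0 Omega F E M).
Proof.
  intros _ FL FM PL PM O E FE OE. split; apply dir; auto. apply opp_sym; auto.
Qed.
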